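(* Let $P$ be a distribution on the finite alphabet $\mathcal X$ and let $C_1,C_2,\dots,C_N$ be i.i.d. according to $P$. The probability that $C^N=(C_1,\dots,C_N)$ does not satisfy the prefix condition (with respect to $P$) tends to zero as $N\to\infty$.
   Context: A sequence $c^N\in\mathcal X^N$ satisfies the prefix condition with respect to $P$ if for every prefix length $i$ with $N/\ln N< i\le N$, the empirical distribution $\hat P_{c^i}$ of $c^i=(c_1,\dots,c_i)$ satisfies $\|P-\hat P_{c^i}\|_1\le 1/\ln N$. *)

(* Defs.v *)
From HB Require Import structures.
From mathcomp Require Import all_boot all_order all_algebra.
From mathcomp Require Import all_classical all_reals all_analysis.
Set Implicit Arguments. Unset Strict Implicit. Unset Printing Implicit Defensive.
Import Order.TTheory GRing.Theory Num.Theory.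
Local Open Scope ring_scope.

Definition is_dist (R : realType) (X : finType) (P : {ffun X -> R}) : Prop :=
  (forall x, 0 <= P x) /\ \sum_(x : X) P x = 1.

Definition emp_dist (R : realType) (X : finType) (N : nat) (c : N.-tuple X)
  (i : nat) (x : X) : R :=
  (count (pred1 x) (take i c))%:R / i%:R.

Definition l1_dist (R : realType) (X : finType) (P : {ffun X -> R}) (Q : X -> R) : R :=
  \sum_(x : X) `|P x - Q x|.

Definition prefix_cond (R : realType) (X : finType) (P : {ffun X -> R})
  (N : nat) (c : N.-tuple X) : bool :=
  [forall i : 'I_N.+1,
    (N%:R / ln (N%:R : R) < (i : nat)%:R) ==>
    (l1_dist P (@emp_dist R X N c i) <= (ln (N%:R : R))^-1)].

Definition iid_prob (R : realType) (X : finType) (P : {ffun X -> R})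
  (N : nat) (A : pred (N.-tuple X)) : R :=
  \sum_(c : N.-tuple X | A c) \prod_(i < N) P (tnth c i).

(* Main.v *)
Require Import Defs.
From HB Require Import structures.
From mathcomp Require Import all_boot all_order all_algebra.
From mathcomp Require Import all_classical all_reals all_analysis.
From mathcomp Require Import lra ring.
Import Order.TTheory GRing.Theory Num.Theory numFieldNormedType.Exports.
Local Open Scope classical_set_scope.
Local Open Scope ring_scope.



Ltac killneq := repeat match goal with
 | H : is_true (?u != ?u) |- _ => by rewrite eqxx in H
 | H : is_true (?u != ?v) |- _ =>
     let H' := fresh in
     (have H' : (v == u) = false by (rewrite eq_sym; exact: negbTE H));
     rewrite ?(negbTE H) ?H'; clear H H'
 end.

Lemma comb (T : eqType) (a b c d : T) :
  let m k := ((a == k) + (b == k) + (c == k) + (d == k))%N in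
  m a != 1%N -> m b != 1%N -> m c != 1%N -> m d != 1%N ->
  [|| (a == b) && (c == d), (a == c) && (b == d) | (a == d) && (b == c)].
Proof.
move=> m; rewrite /m.
try (have [?|?] := eqVneq b a; [subst b|]);
try (have [?|?] := eqVneq c a; [subst c|]);
try (have [?|?] := eqVneq c b; [subst c|]);
try (have [?|?] := eqVneq d a; [subst d|]);
try (have [?|?] := eqVneq d b; [subst d|]);
try (have [?|?] := eqVneq d c; [subst d|]);
rewrite ?eqxx; killneq; by [].
Qed.

Lemma expand4 (R : comRingType) N (u : 'I_N -> R) :
  (\sum_k u k)^+4 = \sum_a \sum_b \sum_c \sum_d u a * u b * u c * u d.
Proof.
rewrite !exprS expr0 mulr1.
rewrite mulr_suml; apply: eq_bigr => a _.
rewrite mulr_suml mulr_sumr; apply: eq_bigr => b _.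
rewrite mulr_suml !mulr_sumr; apply: eq_bigr => c _.
rewrite !mulr_sumr; apply: eq_bigr => d _.
by rewrite !mulrA.
Qed.

Section Moments.
Variables (R : realType) (X : finType) (P : {ffun X -> R}).
Hypothesis HP : is_dist P.
Variable N : nat.

Definition wt (f : {ffun 'I_N -> X}) : R := \prod_i P (f i).
Definition Ex (g : {ffun 'I_N -> X} -> R) : R := \sum_f wt f * g f.

Lemma Ex_prod (h : 'I_N -> X -> R) :
  Ex (fun f => \prod_i h i (f i)) = \prod_i \sum_y P y * h i y.
Proof. rewrite bigA_distr_bigA /Ex; apply eq_bigr => f _; by rewrite /wt -big_split. Qed.

Lemma Ex_sum (I : finType) (G : I -> {ffun 'I_N -> X} -> R) :
  Ex (fun f => \sum_a G a f) = \sum_a Ex (G a).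
Proof. rewrite /Ex; under eq_bigr do rewrite big_distrr; exact: exchange_big. Qed.

Lemma Ex_scale c g : Ex (fun f => c * g f) = c * Ex g.
Proof. by rewrite /Ex big_distrr; apply eq_bigr => f _; rewrite mulrCA. Qed.

Lemma wt_ge0 f : 0 <= wt f.
Proof. by apply: prodr_ge0 => i _; case: HP. Qed.

Lemma Ex_le g h : (forall f, g f <= h f) -> Ex g <= Ex h.
Proof. by move=> gh; apply: ler_sum => f _; apply: ler_wpM2l; [exact: wt_ge0|]. Qed.

Lemma Ex_ext g h : (forall f, g f = h f) -> Ex g = Ex h.
Proof. by move=> gh; apply: eq_bigr => f _; rewrite gh. Qed.

Variable x : X.
Definition Y (y : X) : R := (y == x)%:R - P x.
Definition mom m := \sum_y P y * Y y ^+ m.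

Lemma Px_le1 : P x <= 1.
Proof.
case: HP => H0 <-; rewrite (bigD1 x) //= lerDl; exact: sumr_ge0.
Qed.

Lemma mom1 : mom 1 = 0.
Proof.
rewrite /mom /Y; under eq_bigr do rewrite expr1 mulrBr.
rewrite sumrB -big_distrl /=; case: HP => _ ->; rewrite mul1r.
rewrite (bigD1 x) //= eqxx mulr1 big1 ?addr0 ?subrr // => y /negbTE ->.
by rewrite mulr0.
Qed.

Lemma normY y : `|Y y| <= 1.
Proof.
case: HP => H0 _; have := Px_le1; have := H0 x.
rewrite /Y; case: (y == x) => /= h1 h2.
  by rewrite mulr1n ger0_norm; lra.
by rewrite mulr0n sub0r normrN ger0_norm.
Qed.

Lemma mom_le1 m : `|mom m| <= 1.
Proof.
case: HP => H0 H1; rewrite -H1; apply: (le_trans (ler_norm_sum _ _ _)).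
apply: ler_sum => y _; rewrite normrM normrX ger0_norm //.
apply: ler_piMr => //; exact: exprn_ile1 (normY y).
Qed.

Definition mult (a b c d k : 'I_N) : nat := (a == k) + (b == k) + (c == k) + (d == k).

Lemma prod1 (Z : 'I_N -> R) (a : 'I_N) : \prod_k Z k ^+ (a == k) = Z a.
Proof.
rewrite (bigD1 a) //= eqxx expr1 big1 ?mulr1 // => k; rewrite eq_sym => /negbTE ->.
by rewrite expr0.
Qed.

Lemma prodY (f : {ffun 'I_N -> X}) a b c d :
  Y (f a) * Y (f b) * Y (f c) * Y (f d) = \prod_k Y (f k) ^+ mult a b c d k.
Proof.
rewrite /mult; under eq_bigr do rewrite !exprD.
by rewrite !big_split /= !prod1.
Qed.

Lemma Ex_term a b c d :
  Ex (fun f => Y (f a) * Y (f b) * Y (f c) * Y (f d)) = \prod_k mom (mult a b c d k).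
Proof.
transitivity (Ex (fun f => \prod_k Y (f k) ^+ mult a b c d k)).
  by apply: Ex_ext => f; exact: prodY.
by rewrite (Ex_prod (fun k y => Y y ^+ mult a b c d k)).
Qed.

Definition ind (a b c d : 'I_N) : R :=
  ((a == b) && (c == d))%:R + ((a == c) && (b == d))%:R + ((a == d) && (b == c))%:R.


Lemma term_le (a b c d : 'I_N) : \prod_k mom (mult a b c d k) <= ind a b c d.
Proof.
case E: [|| (a == b) && (c == d), (a == c) && (b == d) | (a == d) && (b == c)].
  apply: (le_trans (ler_norm _)); apply: (@le_trans _ _ 1).
    rewrite (big_morph _ (@normrM _) (@normr1 _)).
    apply: prodr_ile1 => k _; rewrite normr_ge0 /=; exact: mom_le1.
  move: E; rewrite /ind.
  by case: ((a == b) && (c == d)); case: ((a == c) && (b == d));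
    case: ((a == d) && (b == c)) => //= _; rewrite ?mulr1n ?mulr0n; lra.
have [k hk] : exists k, mult a b c d k = 1%N.
  case: (eqVneq (mult a b c d a) 1%N) => [?|h1]; first by exists a.
  case: (eqVneq (mult a b c d b) 1%N) => [?|h2]; first by exists b.
  case: (eqVneq (mult a b c d c) 1%N) => [?|h3]; first by exists c.
  case: (eqVneq (mult a b c d d) 1%N) => [?|h4]; first by exists d.
  by have := @comb _ a b c d h1 h2 h3 h4; rewrite E.
rewrite (bigD1 k) //= hk mom1 mul0r /ind.
by rewrite !addr_ge0.
Qed.


Definition sum4 (F : 'I_N -> 'I_N -> 'I_N -> 'I_N -> R) :=
  \sum_a \sum_b \sum_c \sum_d F a b c d.

Lemma sum4D F G : sum4 (fun a b c d => F a b c d + G a b c d) = sum4 F + sum4 G.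
Proof.
rewrite /sum4 -big_split; apply: eq_bigr => a _; rewrite -big_split.
apply: eq_bigr => b _; rewrite -big_split; apply: eq_bigr => c _.
by rewrite -big_split.
Qed.

Lemma sum4_le F G : (forall a b c d, F a b c d <= G a b c d) -> sum4 F <= sum4 G.
Proof.
move=> h; apply: ler_sum => a _; apply: ler_sum => b _; apply: ler_sum => c _.
by apply: ler_sum => d _.
Qed.

Lemma Ex_sum4 (G : 'I_N -> 'I_N -> 'I_N -> 'I_N -> {ffun 'I_N -> X} -> R) :
  Ex (fun f => sum4 (fun a b c d => G a b c d f)) = sum4 (fun a b c d => Ex (G a b c d)).
Proof.
rewrite /sum4 Ex_sum; apply: eq_bigr => a _; rewrite Ex_sum; apply: eq_bigr => b _.
rewrite Ex_sum; apply: eq_bigr => c _; by rewrite Ex_sum.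
Qed.

Lemma sum_only (G : 'I_N -> R) (a : 'I_N) :
  (forall b, b != a -> G b = 0) -> \sum_b G b = G a.
Proof. by move=> h; rewrite (bigD1 a) //= big1 ?addr0. Qed.

Variable e : 'I_N -> R.

Lemma pair1 : sum4 (fun a b c d => e a * e b * e c * e d * ((a == b) && (c == d))%:R)
  = (\sum_a e a ^+ 2) ^+ 2.
Proof.
rewrite /sum4 expr2 big_distrl; apply: eq_bigr => a _ /=.
rewrite (@sum_only _ a); last first.
  move=> b hb; apply: big1 => c _; apply: big1 => d _.
  by rewrite eq_sym (negbTE hb) /= mulr0.
rewrite mulr_sumr; apply: eq_bigr => c _.
rewrite (@sum_only _ c); last first.
  by move=> d hd; rewrite eq_sym (negbTE hd) andbF /= mulr0.
rewrite !eqxx /= mulr1; ring.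
Qed.

Lemma pair2 : sum4 (fun a b c d => e a * e b * e c * e d * ((a == c) && (b == d))%:R)
  = (\sum_a e a ^+ 2) ^+ 2.
Proof.
rewrite /sum4 expr2 big_distrl; apply: eq_bigr => a _ /=.
rewrite mulr_sumr; apply: eq_bigr => b _.
rewrite (@sum_only _ a); last first.
  move=> c hc; apply: big1 => d _.
  by rewrite eq_sym (negbTE hc) /= mulr0.
rewrite (@sum_only _ b); last first.
  by move=> d hd; rewrite eq_sym (negbTE hd) andbF /= mulr0.
rewrite !eqxx /= mulr1; ring.
Qed.

Lemma pair3 : sum4 (fun a b c d => e a * e b * e c * e d * ((a == d) && (b == c))%:R)
  = (\sum_a e a ^+ 2) ^+ 2.
Proof.
rewrite /sum4 expr2 big_distrl; apply: eq_bigr => a _ /=.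
rewrite mulr_sumr; apply: eq_bigr => b _.
rewrite (@sum_only _ b); last first.
  move=> c hc; apply: big1 => d _.
  by rewrite (eq_sym b c) (negbTE hc) andbF /= mulr0.
rewrite (@sum_only _ a); last first.
  by move=> d hd; rewrite eq_sym (negbTE hd) /= mulr0.
rewrite !eqxx /= mulr1; ring.
Qed.

Hypothesis he : forall k, 0 <= e k <= 1.

Lemma fourth :
  Ex (fun f => (\sum_k e k * Y (f k))^+4) <= 3 * (\sum_k e k)^+2.
Proof.
have -> : Ex (fun f => (\sum_k e k * Y (f k))^+4) =
   Ex (fun f => sum4 (fun a b c d => e a * Y (f a) * (e b * Y (f b)) * (e c * Y (f c))
       * (e d * Y (f d)))).
  by apply: Ex_ext => f; rewrite expand4.
rewrite (Ex_sum4 (fun a b c d f => e a * Y (f a) * (e b * Y (f b)) * (e c * Y (f c))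
       * (e d * Y (f d)))).
apply: (@le_trans _ _ (sum4 (fun a b c d => e a * e b * e c * e d * ind a b c d))).
  apply: sum4_le => a b c d.
  have -> : Ex (fun f => e a * Y (f a) * (e b * Y (f b)) * (e c * Y (f c)) * (e d * Y (f d)))
    = e a * e b * e c * e d * Ex (fun f => Y (f a) * Y (f b) * Y (f c) * Y (f d)).
    rewrite -Ex_scale; apply: Ex_ext => f; ring.
  rewrite Ex_term; apply: ler_wpM2l; last exact: term_le.
  have [ha _] := andP (he a); have [hb _] := andP (he b).
  have [hc _] := andP (he c); have [hd _] := andP (he d).
  by rewrite !mulr_ge0.
rewrite /ind.
have -> : sum4 (fun a b c d => e a * e b * e c * e d *
   (((a == b) && (c == d))%:R + ((a == c) && (b == d))%:R + ((a == d) && (b == c))%:R))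
  = sum4 (fun a b c d => e a * e b * e c * e d * ((a == b) && (c == d))%:R
      + e a * e b * e c * e d * ((a == c) && (b == d))%:R
      + e a * e b * e c * e d * ((a == d) && (b == c))%:R).
  by apply: eq_bigr => a _; apply: eq_bigr => b _; apply: eq_bigr => c _;
    apply: eq_bigr => d _; rewrite !mulrDr.
rewrite !sum4D pair1 pair2 pair3.
have h1 : 0 <= \sum_a e a ^+ 2 by apply: sumr_ge0 => a _; exact: sqr_ge0.
have h2 : \sum_a e a ^+ 2 <= \sum_a e a.
  apply: ler_sum => a _; have := he a; case/andP => ha1 ha2.
  by rewrite expr2 ler_piMr.
have : (\sum_a e a ^+ 2) ^+ 2 <= (\sum_a e a) ^+ 2.
  by rewrite !expr2; apply: ler_pM.
lra.
Qed.
End Moments.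



Lemma count_iota0 (R : realType) (p : pred nat) i :
  (count p (iota 0 i))%:R = \sum_(j < i) (p j)%:R :> R.
Proof.
elim: i => [|i IH]; first by rewrite big_ord0.
have -> : iota 0 i.+1 = iota 0 i ++ [:: i] by rewrite -addn1 iotaD.
by rewrite big_ord_recr /= count_cat natrD IH /= addn0.
Qed.

Lemma count_take (R : realType) (X : finType) N (c : N.-tuple X) (x : X) i :
  (i <= N)%N ->
  (count (pred1 x) (take i c))%:R =
     \sum_(k < N) (k < i)%:R * (tnth c k == x)%:R :> R.
Proof.
move=> iN; rewrite -(map_nth_iota0 x) ?size_tuple // count_map count_iota0.
rewrite (big_ord_widen N (fun j => ((nth x c j) == x)%:R : R)) // big_mkcond /=.
apply: eq_bigr => k _; rewrite (tnth_nth x); case: (k < i)%N => /=.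
  by rewrite mul1r.
by rewrite mul0r.
Qed.

Lemma iid_ffun (R : realType) (X : finType) (P : {ffun X -> R}) N (A : pred (N.-tuple X)) :
  iid_prob P A = \sum_(f : {ffun 'I_N -> X} | A [tuple f k | k < N]) \prod_k P (f k).
Proof.
rewrite /iid_prob (reindex (fun f : {ffun 'I_N -> X} => [tuple f k | k < N])) /=.
  apply: eq_bigr => f _; apply: eq_bigr => i _; by rewrite tnth_mktuple.
exists (fun c : N.-tuple X => [ffun k => tnth c k]) => [f _|c _].
  by apply/ffunP => k; rewrite ffunE tnth_mktuple.
by apply: eq_from_tnth => k; rewrite tnth_mktuple ffunE.
Qed.



Lemma sum_e (R : realType) N i : (i <= N)%N ->
  \sum_(k < N) ((k : nat) < i)%:R = i%:R :> R.
Proof.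
move=> iN; transitivity (\sum_(k < i) (1 : R)); last by rewrite sumr_const card_ord.
rewrite (big_ord_widen N (fun _ => 1 : R)) // [RHS]big_mkcond; apply: eq_bigr => k _.
by case: (k < i)%N.
Qed.

Lemma card_pos (R : realType) (X : finType) (P : {ffun X -> R}) :
  is_dist P -> (0 < #|X|)%N.
Proof.
move=> [_ HP]; rewrite lt0n; apply/negP => /eqP h0.
move: HP; rewrite big_pred0 => [/eqP|x]; first by rewrite eq_sym oner_eq0.
exact: (card0_eq h0 x).
Qed.

Definition bR (R : realType) (b : bool) : R := b%:R.

Lemma bound_N (R : realType) (X : finType) (P : {ffun X -> R}) (HP : is_dist P) N :
  (1 < N)%N ->
  iid_prob P (fun c : N.-tuple X => ~~ prefix_cond P c) <=
   \sum_(i : 'I_N.+1) \sum_(x : X) bR R (N%:R / ln (N%:R : R) < (i : nat)%:R) *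
      ((#|X|%:R * ln (N%:R : R) / (i : nat)%:R)^+4 * (3 * (i : nat)%:R^+2)).
Proof.
move=> N1.
set L := ln (N%:R : R).
have L0 : 0 < L by apply: ln_gt0; rewrite ltr1n.
set K := #|X|%:R * L.
have cX := @card_pos _ _ _ HP.
have K0 : 0 < K by rewrite mulr_gt0 // ltr0n.
pose e (i : nat) (k : 'I_N) : R := ((k : nat) < i)%:R.
pose S (i : nat) x (f : {ffun 'I_N -> X}) := \sum_k e i k * Y R X P x (f k).
pose G (f : {ffun 'I_N -> X}) := \sum_(i : 'I_N.+1) \sum_(x : X)
   bR R (N%:R / L < (i : nat)%:R) * ((K / (i : nat)%:R) * S i x f)^+4.
have G0 f : 0 <= G f.
  apply: sumr_ge0 => i _; apply: sumr_ge0 => x _; apply: mulr_ge0; first by rewrite /bR ler0n.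
  exact: exprn_even_ge0.
have G1 (f : {ffun 'I_N -> X}) : ~~ prefix_cond P [tuple f k | k < N] -> 1 <= G f.
  move=> /forallPn [i]; rewrite negb_imply => /andP [ci hl].
  rewrite -ltNge in hl.
  have iN : ((i : nat) <= N)%N by rewrite -ltnS.
  have i0 : 0 < (i : nat)%:R :> R.
    by apply: lt_trans ci; rewrite divr_gt0 // ltr0n; apply: ltnW.
  have [x hx] : exists x, K^-1 < `|P x - emp_dist R [tuple f k | k < N] i x|.
    case: (boolP [exists x, K^-1 < `|P x - emp_dist R [tuple f k | k < N] i x|]).
      by move/existsP.
    move/existsPn => hall; move: hl; rewrite ltNge => /negP; case.
    rewrite /l1_dist; apply: (@le_trans _ _ (\sum_(x : X) K^-1)).
      by apply: ler_sum => x _; rewrite leNgt; exact: hall x.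
    rewrite sumr_const -[Z in Z <= _]mulr_natl /K invfM mulrA.
    rewrite (_ : #|xpredT| = #|X|) // mulfV ?mul1r //.
    by rewrite pnatr_eq0 -lt0n.
  have hSe : S i x f = \sum_k e i k * (f k == x)%:R - P x * (i : nat)%:R.
    rewrite /S /Y; under eq_bigr do rewrite mulrBr.
    rewrite sumrB -(@sum_e R N i iN) mulr_sumr; congr (_ - _).
    by apply: eq_bigr => k _; rewrite mulrC.
  have hS : P x - emp_dist R [tuple f k | k < N] i x = - (S i x f) / (i : nat)%:R.
    rewrite /emp_dist count_take // hSe.
    under eq_bigr do rewrite tnth_mktuple.
    rewrite /e; field; exact: lt0r_neq0 i0.
  have y1 : 1 < `|K / (i : nat)%:R * S i x f|.
    move: hx; rewrite hS normrM normrN normrV ?unitfE ?lt0r_neq0 //.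
    rewrite (ger0_norm (ltW i0)) => hx.
    rewrite normrM ger0_norm ?divr_ge0 ?ltW //.
    rewrite -[Z in Z < _](mulfV (lt0r_neq0 K0)) [K / _ * _]mulrAC -mulrA ltr_pM2l //.

  have y4 : 1 <= (K / (i : nat)%:R * S i x f) ^+ 4.
    rewrite -[_ ^+ 4]ger0_norm ?exprn_even_ge0 // normrX.
    by apply: exprn_ege1; exact: (ltW y1).
  rewrite /G (bigD1 i) //= (bigD1 x) //= ci /bR mul1r -addrA.
  apply: (le_trans y4); rewrite lerDl; apply: addr_ge0.
    apply: sumr_ge0 => z _; apply: mulr_ge0; first by rewrite ler0n.
    exact: exprn_even_ge0.
  apply: sumr_ge0 => j _; apply: sumr_ge0 => z _; apply: mulr_ge0.
    by rewrite /bR ler0n.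
  exact: exprn_even_ge0.
apply: (@le_trans _ _ (Ex R X P N G)).
  rewrite iid_ffun /Ex big_mkcond /=; apply: ler_sum => f _; case: ifP => h.
    by rewrite -[X in X <= _]mulr1; apply: ler_wpM2l; [exact: wt_ge0 | exact: G1].
  by rewrite mulr_ge0 //; exact: wt_ge0.
rewrite /G Ex_sum; apply: ler_sum => i _; rewrite Ex_sum; apply: ler_sum => x _.
have iN : ((i : nat) <= N)%N by rewrite -ltnS.
rewrite (@Ex_ext R X P N _ (fun f => bR R (N%:R / L < (i : nat)%:R) * (K / (i : nat)%:R)^+4 *
    (S i x f)^+4)); last by move=> f; rewrite exprMn mulrA.
rewrite Ex_scale -mulrA; apply: ler_wpM2l; first by rewrite /bR ler0n.
apply: ler_wpM2l; first exact: exprn_even_ge0.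
rewrite -(@sum_e R N i iN); apply: fourth => // k.
by rewrite /e; case: (k < i)%N => /=; rewrite ?ler01 ?lexx.
Qed.



Lemma L7 (R : realType) N : (1 < N)%N -> ln (N%:R : R) ^+ 7 <= 7`!%:R * N%:R.
Proof.
move=> N1.
have L0 : 0 <= ln (N%:R : R) by apply: ln_ge0; rewrite ler1n ltnW.
have := expR_ge1Dxn 6 L0; rewrite lnK; last by rewrite posrE ltr0n ltnW.
have h5 : (0 : R) < 7`!%:R by rewrite ltr0n fact_gt0.
move: (7`!%:R : R) h5 => M h5 h.
rewrite -ler_pdivrMl //; lra.
Qed.

Lemma sum_bound (R : realType) (X : finType) (P : {ffun X -> R}) N :
  (1 < N)%N ->
   \sum_(i : 'I_N.+1) \sum_(x : X) bR R (N%:R / ln (N%:R : R) < (i : nat)%:R) *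
      ((#|X|%:R * ln (N%:R : R) / (i : nat)%:R)^+4 * (3 * (i : nat)%:R^+2))
   <= (6 * 7`!%:R) * #|X|%:R ^+ 5 / ln (N%:R : R).
Proof.
move=> N1.
set L := ln (N%:R : R).
have L0 : 0 < L by apply: ln_gt0; rewrite ltr1n.
set c := #|X|%:R : R.
have c0 : 0 <= c by rewrite ler0n.
set n := N%:R : R.
have n1 : 1 < n by rewrite ltr1n.
set T := 3 * (c * L) ^+ 4 * (L / n) ^+ 2.
have T0 : 0 <= T.
  rewrite /T; apply: mulr_ge0.
    apply: mulr_ge0 => //; apply: exprn_ge0; apply: mulr_ge0 => //; exact: ltW.
  apply: exprn_ge0; apply: divr_ge0; apply: ltW => //; lra.
have term (i : 'I_N.+1) : bR R (n / L < (i : nat)%:R) *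
      ((c * L / (i : nat)%:R)^+4 * (3 * (i : nat)%:R^+2)) <= T.
  rewrite /bR; case ci: (n / L < (i : nat)%:R) => /=; last by rewrite mul0r.
  rewrite mul1r.
  have nL : 0 < n / L by rewrite divr_gt0 // (lt_trans ltr01).
  have i0 : 0 < (i : nat)%:R :> R by apply: lt_trans ci.
  have ii : ((i : nat)%:R)^-1 < L / n.
    by rewrite -[L / n]invf_div ltf_pV2 ?posrE.
  have -> : (c * L / (i : nat)%:R)^+4 * (3 * (i : nat)%:R^+2)
       = 3 * (c * L) ^+ 4 * (((i : nat)%:R)^-1)^+2.
    by field; exact: lt0r_neq0.
  rewrite /T; apply: ler_wpM2l; first by rewrite mulr_ge0 // exprn_ge0 // mulr_ge0 // ltW.
  rewrite !expr2; apply: ler_pM; rewrite ?invr_ge0 ?ltW //.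
apply: (@le_trans _ _ (\sum_(i : 'I_N.+1) \sum_(x : X) T)).
  by apply: ler_sum => i _; apply: ler_sum => x _; exact: term.
rewrite !sumr_const card_ord (_ : #|xpredT| = #|X|) //.
rewrite -[(_ *+ #|X|) *+ _]mulr_natr -[T *+ #|X|]mulr_natr -/c.
rewrite -addn1 natrD -/n.
have hL7 : L ^+ 7 <= 7`!%:R * n by exact: L7.
have M0 : (0 : R) < 7`!%:R by rewrite ltr0n fact_gt0.
move: (7`!%:R : R) M0 hL7 => M M0 hL7.
have -> : T * c * (n + 1) = (3 * c ^+ 5 * L ^+ 7 * (n + 1)) * (n ^+ 2 * L)^-1.
  rewrite /T; field; apply/andP; split; apply: lt0r_neq0 => //; rewrite -/n; lra.
have -> : (6 * M) * c ^+ 5 / L = ((6 * M) * c ^+ 5 * n ^+ 2) * (n ^+ 2 * L)^-1.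
  field; apply/andP; split; apply: lt0r_neq0 => //; rewrite -/n; lra.
rewrite ler_pM2r; last by rewrite invr_gt0 mulr_gt0 // exprn_gt0 //; lra.
have c5 : 0 <= c ^+ 5 by rewrite exprn_ge0.
have l7 : 0 <= L ^+ 7 by rewrite exprn_ge0 // ltW.
move: (c ^+ 5) (L ^+ 7) c5 l7 hL7 => p q p0 q0 hq.
have : p * q * (n + 1) <= p * (M * n) * (2 * n).
  by apply: ler_pM; [rewrite mulr_ge0 | lra | apply: ler_wpM2l | lra].
rewrite expr2; nra.
Qed.



Theorem lemma4 (R : realType) (X : finType) (P : {ffun X -> R}) :
  is_dist P ->
  (fun N : nat => iid_prob P (fun c : N.-tuple X => ~~ prefix_cond P c))
    @ \oo --> (0 : R).
Proof.
move=> HP.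
set C : R := (6 * 7`!%:R) * #|X|%:R ^+ 5.
have C0 : 0 <= C by rewrite mulr_ge0 // exprn_ge0.
apply/cvgrPdist_lt => eps eps0.
have /cvgryPgt hinf := @cvgr_idn R.
near=> N.
have hN : expR (C / eps) < N%:R by near: N; exact: hinf.
have e1 : 1 <= expR (C / eps).
  by apply: le_trans (expR_ge1Dx _); rewrite lerDl divr_ge0 // ltW.
have N1 : (1 < N)%N by rewrite -(ltr1n R); exact: le_lt_trans hN.
have u0 : 0 <= iid_prob P (fun c : N.-tuple X => ~~ prefix_cond P c).
  apply: sumr_ge0 => c _; apply: prodr_ge0 => i _; by case: HP.
rewrite sub0r normrN ger0_norm //.
apply: (le_lt_trans (le_trans (@bound_N R X P HP N N1) (@sum_bound R X P N N1))).
rewrite -/C.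
have L0 : 0 < ln (N%:R : R) by apply: ln_gt0; rewrite ltr1n.
have hL : C / eps < ln (N%:R : R).
  rewrite -[X in X < _](expRK) ltr_ln ?posrE ?expR_gt0 // ltr0n ltnW //.
rewrite ltr_pdivrMr // mulrC -ltr_pdivrMr //.
Unshelve. all: end_near.
Qed.
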